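(* Let $n,k$ be integers with $2<2k\le n$ such that the integer program $( * )$ has a solution but no trivial solution, and let $2r+1$ be the optimal value of $( * )$ (so that $g_{odd}(\mathrm{Pet}(n,k))=2r+3$). Then there is no homomorphism $\mathrm{Pet}(n,k)\to C_{2r+3}$.
   Context: For integers $n,k$ with $2<2k\le n$, the generalized Petersen graph $\mathrm{Pet}(n,k)$ has vertex set $\{u_0,\dots,u_{n-1}\}\cup\{v_0,\dots,v_{n-1}\}$ and edge set $\{u_iu_{i+1}\}\cup\{u_iv_i\}\cup\{v_iv_{i+k}\}$, indices modulo $n$. The integer program $( * )$ is: minimize $\mathsf{u}+\mathsf{v}_++\mathsf{v}_-$ over integers $\mathsf{u},\mathsf{v}_+,\mathsf{v}_-,r\ge 0$ and $t\in\mathbb{Z}$ subject to $\mathsf{u}+k(\mathsf{v}_+-\mathsf{v}_-)=tn$ and $\mathsf{u}+\mathsf{v}_++\mathsf{v}_-=2r+1$. A solution is a minimizer; it is trivial if $\mathsf{u}=0$ or $\mathsf{v}_++\mathsf{v}_-=0$. $C_m$ is the cycle of length $m$; $g_{odd}$ is the odd girth. A homomorphism $G\to H$ is a map $V(G)\to V(H)$ sending edges to edges. *)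

(* Defs.v *)
From HB Require Import structures.
From mathcomp Require Import all_boot all_order all_algebra.
Set Implicit Arguments. Unset Strict Implicit. Unset Printing Implicit Defensive.
Import Order.TTheory GRing.Theory Num.Theory.

(* Vertices of Pet(n,k): inl i = u_i, inr i = v_i, with i : 'I_n. *)
Definition pet_vertex (n : nat) : finType := ('I_n + 'I_n)%type.

Definition pet_adj (n k : nat) (x y : pet_vertex n) : bool :=
  match x, y with
  | inl i, inl j => (val j == (val i).+1 %% n) || (val i == (val j).+1 %% n)
  | inl i, inr j => val i == val j
  | inr i, inl j => val i == val j
  | inr i, inr j => (val j == (val i + k) %% n) || (val i == (val j + k) %% n)
  end.

Arguments pet_adj : clear implicits.

Definition cycle_adj (m : nat) (i j : 'I_m) : bool :=
  (val j == (val i).+1 %% m) || (val i == (val j).+1 %% m).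

Arguments cycle_adj : clear implicits.

Definition pet_hom_to_cycle (n k m : nat) (f : pet_vertex n -> 'I_m) : Prop :=
  forall x y : pet_vertex n, pet_adj n k x y -> cycle_adj m (f x) (f y).

Definition ip_feasible (n k u vp vm : nat) : Prop :=
  (exists t : int, (u%:Z + k%:Z * (vp%:Z - vm%:Z) = t * n%:Z)%R) /\
  (exists r : nat, u + vp + vm = 2 * r + 1).

Definition ip_solution (n k u vp vm : nat) : Prop :=
  ip_feasible n k u vp vm /\
  forall u' vp' vm', ip_feasible n k u' vp' vm' -> u + vp + vm <= u' + vp' + vm'.

Arguments pet_hom_to_cycle : clear implicits.

Definition ip_trivial (u vp vm : nat) : Prop := u = 0 \/ vp + vm = 0.

(* Main.v *)
Require Import Defs.
From HB Require Import structures.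
From mathcomp Require Import all_boot all_order all_algebra.
From mathcomp Require Import zify ring.
Import GRing.Theory Num.Theory.
Set Implicit Arguments. Unset Strict Implicit.

Definition fw m (a b : 'I_m) : bool := val b == (val a).+1 %% m.

Lemma modS_cases m a : a < m -> a.+1 %% m = if a.+1 == m then 0 else a.+1.
Proof.
move=> am; case: eqP => [->|ne]; first by rewrite modnn.
rewrite modn_small //; lia.
Qed.

Lemma fw_antisym m (a b : 'I_m) : 2 < m -> cycle_adj m a b -> fw b a = ~~ fw a b.
Proof.
move=> m3; move: a b => [a ha] [b hb]; rewrite /cycle_adj /fw /=.
rewrite !modS_cases //.
case: (a.+1 =P m) => ?; case: (b.+1 =P m) => ?;
  case: (b =P _) => ?; case: (a =P _) => ? //=; lia.
Qed.

Lemma step_mod m (a b : 'I_m) : cycle_adj m a b ->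
  exists c : int, (Posz (val b) - Posz (val a) = 1 - 2 * Posz (~~ fw a b) + c * Posz m)%R.
Proof.
move: a b => [a ha] [b hb]; rewrite /cycle_adj /fw /= !modS_cases //.
case: (a.+1 =P m) => ?; case: (b.+1 =P m) => ?;
  case: (b =P _) => ?; case: (a =P _) => ? //= _.
all: first [exists 0%R; lia | exists 1%R; lia | exists (-1)%R; lia].
Qed.

Lemma sum_bool_le (g : nat -> bool) j : \sum_(l < j) (g l : nat) <= j.
Proof. elim: j => [|j IH]; first by rewrite big_ord0. rewrite big_ord_recr /=; move: IH; case: (g j) => /=; lia. Qed.

Lemma sum_bool_0 (g : nat -> bool) j : \sum_(l < j) (g l : nat) = 0 -> forall l, l < j -> g l = false.
Proof.
elim: j => [|j IH] //. rewrite big_ord_recr /= => H l lj.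
move/eqP: H; rewrite addn_eq0 => /andP [/eqP H1 /eqP H2].
case: (ltngtP l j) => [lt|gt|->]; first exact: IH.
- lia.
- by case: (g j) H2.
Qed.

Lemma sum_bool_full (g : nat -> bool) j : \sum_(l < j) (g l : nat) = j -> forall l, l < j -> g l = true.
Proof.
elim: j => [|j IH] //. rewrite big_ord_recr /= => H l lj.
have := sum_bool_le g j.
move: H; case E: (g j) => /= H Hle.
  have H1 : \sum_(i < j) (g i : nat) = j by move: H; rewrite addn1 => -[].
  case: (ltngtP l j) => [lt|gt|->] //; first exact: IH.
  lia.
have : j.+1 <= j by rewrite -{1}H addn0; exact: Hle.
by rewrite ltnn.
Qed.
Lemma dummy : True. Proof. exact I.
Qed.

Lemma walk_mod m (W : nat -> 'I_m) : (forall j, j < m -> cycle_adj m (W j) (W j.+1)) ->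
  forall j, j <= m -> exists c : int,
  (Posz (val (W j)) - Posz (val (W 0)) = Posz j - 2 * Posz (\sum_(l < j) (~~ fw (W l) (W l.+1) : nat)) + c * Posz m)%R.
Proof.
move=> Hadj; elim=> [|j IH] jm.
  exists 0%R; rewrite big_ord0. move: (val (W 0)) => x. lia.
have [c Hc] := IH (ltnW jm).
have [c' Hc'] := step_mod (Hadj j jm).
exists (c + c')%R; rewrite big_ord_recr /=.
move: Hc Hc'; case: (~~ fw _ _) => /=; lia.
Qed.

Lemma cyc_all_eq r (W : nat -> 'I_(2 * r + 3)) :
  (forall j, j < 2 * r + 3 -> cycle_adj _ (W j) (W j.+1)) -> W (2 * r + 3) = W 0 ->
  forall j, j < 2 * r + 3 -> fw (W j) (W j.+1) = fw (W 0) (W 1).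
Proof.
move=> Hadj Hc.
have [c Hcc] := walk_mod Hadj (leqnn _).
rewrite Hc in Hcc.
have Hle := sum_bool_le (fun l => ~~ fw (W l) (W l.+1)) (2 * r + 3).
set N := \sum_(l < _) _ in Hcc Hle.
have : N = 0 \/ N = 2 * r + 3.
  clearbody N; move: (val (W 0)) Hcc => x Hcc.
  have m0 : (0 <= Posz (2 * r + 3))%R by [].
  have [c2|[c2|[c2|[c2|c2]]]] : (2 <= c \/ c = 1 \/ c = 0 \/ c = -1 \/ c <= -2)%R by lia.
  - have := ler_wpM2r m0 c2; lia.
  - subst c; lia.
  - subst c; lia.
  - subst c; lia.
  - have := ler_wpM2r m0 c2; lia.
case=> HN j jm; rewrite /N in HN.
- have H0 := @sum_bool_0 (fun l => ~~ fw (W l) (W l.+1)) _ HN.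
  by move: (H0 j jm) (H0 0 ltac:(lia)) => /negbFE -> /negbFE ->.
- have H0 := @sum_bool_full (fun l => ~~ fw (W l) (W l.+1)) _ HN.
  by move: (H0 j jm) (H0 0 ltac:(lia)) => /negbTE -> /negbTE ->.
Qed.

Definition md n (Hn : 0 < n) x : 'I_n := Ordinal (ltn_pmod x Hn).

Section Walk.
Variables (n k u vp vm : nat) (Hn : 0 < n) (Hkn : k <= n)
  (Hcl : (u + vp * k + vm * (n - k)) %% n = 0).

Definition wk i j : pet_vertex n :=
  if j <= u then inl (md Hn (i + j))
  else if j < u + 1 + vp then inr (md Hn (i + u + (j - u - 1) * k))
  else if j <= u + 1 + vp + vm then inr (md Hn (i + u + vp * k + (j - u - 1 - vp) * (n - k)))
  else inl (md Hn i).

Lemma md_eq x y : x %% n = y %% n -> md Hn x = md Hn y.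
Proof. by move=> h; apply: val_inj. Qed.

Lemma wE1 i j : j <= u -> wk i j = inl (md Hn (i + j)).
Proof. by rewrite /wk => ->. Qed.

Lemma wE2 i l : l <= vp -> wk i (u + 1 + l) = inr (md Hn (i + u + l * k)).
Proof.
move=> hl; rewrite /wk ifF; last lia.
have -> : u + 1 + l - u - 1 = l by lia.
case: ifP => // h2.
have el : l = vp by lia.
subst l; rewrite ifT; last lia.
by rewrite subnn mul0n addn0.
Qed.

Lemma wE3 i l : l <= vm -> wk i (u + 1 + vp + l) = inr (md Hn (i + u + vp * k + l * (n - k))).
Proof.
move=> hl; rewrite /wk ifF; last lia.
rewrite ifF; last lia.
rewrite ifT; last lia.
by have -> : u + 1 + vp + l - u - 1 - vp = l by lia.
Qed.

Lemma wEm i : wk i (u + vp + vm + 2) = inl (md Hn i).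
Proof. by rewrite /wk ifF ?ifF ?ifF //; lia. Qed.

Lemma modS x : (x %% n).+1 %% n = x.+1 %% n.
Proof. by rewrite -addn1 modnDml addn1. Qed.

Lemma md_close i : md Hn (i + u + vp * k + vm * (n - k)) = md Hn i.
Proof.
apply: md_eq.
have -> : i + u + vp * k + vm * (n - k) = i + (u + vp * k + vm * (n - k)) by rewrite !addnA.
by rewrite -modnDmr Hcl addn0.
Qed.

Lemma wadj i j : j < u + vp + vm + 2 -> pet_adj n k (wk i j) (wk i j.+1).
Proof.
move=> hj.
case: (ltnP j u) => h1.
  rewrite !wE1 //; last lia.
  by rewrite /pet_adj /= modS addnS eqxx.
case: (leqP j u) => h2.
  have eu : j = u by lia.
  subst j; have -> : u.+1 = u + 1 + 0 by lia.
  by rewrite wE1 // wE2 //= mul0n addn0.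
case: (ltnP j (u + 1 + vp)) => h3.
  have -> : j = u + 1 + (j - u - 1) by lia.
  have -> : (u + 1 + (j - u - 1)).+1 = u + 1 + (j - u - 1).+1 by lia.
  rewrite !wE2; [|lia|lia].
  by rewrite /pet_adj /= modnDml mulSnr addnA eqxx.
case: (ltnP j (u + 1 + vp + vm)) => h4.
  have -> : j = u + 1 + vp + (j - u - 1 - vp) by lia.
  have -> : (u + 1 + vp + (j - u - 1 - vp)).+1 = u + 1 + vp + (j - u - 1 - vp).+1 by lia.
  rewrite !wE3; [|lia|lia].
  set l := j - u - 1 - vp.
  set X := i + u + vp * k + l * (n - k).
  have -> : i + u + vp * k + l.+1 * (n - k) = X + (n - k) by rewrite /X mulSnr addnA.
  rewrite /pet_adj /=; apply/orP; right.
  by rewrite modnDml -addnA subnK // modnDr.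
have ej : j = u + 1 + vp + vm by lia.
have -> : j.+1 = u + vp + vm + 2 by lia.
rewrite ej wE3 // wEm md_close.
by rewrite /pet_adj /=.
Qed.

Lemma wclosed i : wk i (u + vp + vm + 2) = wk i 0.
Proof. by rewrite wEm wE1 // addn0. Qed.

End Walk.

Theorem mainTheorem18 (n k r : nat) :
  2 < 2 * k -> 2 * k <= n ->
  (exists u vp vm, ip_solution n k u vp vm /\ u + vp + vm = 2 * r + 1) ->
  (forall u vp vm, ip_solution n k u vp vm -> ~ ip_trivial u vp vm) ->
  ~ (exists f : pet_vertex n -> 'I_(2 * r + 3), pet_hom_to_cycle n k (2 * r + 3) f).
Proof.
move=> hk hkn [u [vp [vm [Hsol Hsum]]]] Hnt [f Hf].
have Hn : 0 < n by lia.
have Hkn : k <= n by lia.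
have u0 : u <> 0 by move=> u0; apply: (Hnt u vp vm Hsol); left.
case: Hsol => [[[t Ht] _] _].
have Hcl : (u + vp * k + vm * (n - k)) %% n = 0.
  have : (Posz n %| Posz (u + vp * k + vm * (n - k)))%Z.
    apply/dvdzP; exists (t + Posz vm)%R.
    rewrite !PoszD !PoszM -subzn // mulrDl -Ht; ring.
  by rewrite dvdzE /= => /eqP.
have m3 : 2 < 2 * r + 3 by lia.
pose P i := fw (f (inl (md Hn i))) (f (inr (md Hn i))).
pose S i := fw (f (inl (md Hn i))) (f (inl (md Hn i.+1))).
have key : forall i, [/\ P (i + u) = S i, ~~ P i = S i & (2 <= u -> S i.+1 = S i)].
  move=> i.
  pose W j := f (wk k u vp vm Hn i j).
  have HW : forall j, j < 2 * r + 3 -> fw (W j) (W j.+1) = fw (W 0) (W 1).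
    apply: cyc_all_eq.
    - move=> j hj; apply: Hf; apply: wadj => //; lia.
    - rewrite /W -(wclosed Hn Hkn Hcl i); congr (f (wk _ _ _ _ _ _ _)); lia.
  have S0 : fw (W 0) (W 1) = S i.
    have u1 : 1 <= u by lia.
    by rewrite /W (wE1 k vp vm Hn i (leq0n u)) (wE1 k vp vm Hn i u1) addn0 addn1.
  split.
  - have := HW u ltac:(lia); rewrite S0 /W wE1 //.
    have -> : u.+1 = u + 1 + 0 by lia.
    by rewrite wE2 //= mul0n addn0.
  - have := HW (u + 1 + vp + vm) ltac:(lia); rewrite S0 /W (wE3 Hn Hkn Hcl i (leqnn vm)).
    have -> : (u + 1 + vp + vm).+1 = u + vp + vm + 2 by lia.
    rewrite (wEm Hn Hkn Hcl). have E := md_close Hn Hcl i. rewrite E => <-.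
    rewrite fw_antisym //; apply: Hf; by rewrite /pet_adj.
  - move=> u2; have := HW 1 ltac:(lia).
    have u1 : 1 <= u by lia.
    rewrite S0 /W (wE1 k vp vm Hn i u1) (wE1 k vp vm Hn i u2).
    by rewrite /S addn1 addn2.
have Pu : forall i, P (i + u) = ~~ P i.
  by move=> i; case: (key i) => -> <-.
have Pn : P n = P 0.
  by rewrite /P (md_eq Hn (x := n) (y := 0)) // modnn mod0n.
case: (ltnP 1 u) => u2.
  have Pc : forall i, P i.+1 = P i.
    move=> i; case: (key i.+1) => _ E1 _; case: (key i) => _ E2 E3.
    by apply: negb_inj; rewrite E1 E3 // E2.
  have Pj : forall j, P j = P 0 by elim=> // j IH; rewrite Pc IH.
  by have := Pu 0; rewrite add0n Pj; case: (P 0).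
have e1 : u = 1 by lia.
subst u.
have Pj : forall j, P j = P 0 (+) odd j.
  elim=> [|j IH]; first by rewrite addbF.
  have := Pu j; rewrite addn1 => ->; rewrite IH /=.
  by case: (P 0); case: (odd j).
have on : odd n = false by have := Pj n; rewrite Pn; case: (P 0); case: (odd n).
have hn := odd_double_half n; rewrite on add0n in hn.
move: Ht; rewrite -hn.
have Hvp : Posz vp = (2 * Posz r - Posz vm)%R by lia.
rewrite Hvp.
have -> : (1 + Posz k * (2 * Posz r - Posz vm - Posz vm))%R
   = (1 + 2 * (Posz k * (Posz r - Posz vm)))%R by ring.
have -> : (t * Posz (n./2).*2)%R = (2 * (t * Posz n./2))%R.
  by rewrite -muln2 PoszM; ring.
move: (Posz k * _)%R (t * _)%R => a b; lia.
Qed.
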